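(* Let $n\geq 1$ and $m\geq 2$. The perfect matchings $M_1=E_1\cup E_3\cup\cdots\cup E_{2m-1}$ and $M_2=E_2\cup E_4\cup\cdots\cup E_{2m}$ of $T(2n+1,2m)$ lie in different components of the total resonance graph $R_t(T(2n+1,2m))$.
   Context: $T(2n+1,2m)$ is the graph of the quadriculated torus with $2n+1$ rows and $2m$ columns: vertices $(u_i,v_j)$ for $i\in\mathbb{Z}_{2m}$ (indices $1,\dots,2m$ mod $2m$) and $j\in\mathbb{Z}_{2n+1}$, with $(u_i,v_j)$ adjacent to $(u_{i+1},v_j)$ and to $(u_i,v_{j+1})$; it is cellularly embedded in the torus with faces the $4$-cycles $(u_i,v_j)(u_{i+1},v_j)(u_{i+1},v_{j+1})(u_i,v_{j+1})$. For $1\le i\le 2m$, $E_i=\{(u_i,v_j)(u_{i+1},v_j): 1\le j\le 2n+1\}$ (index $i+1$ mod $2m$). The total resonance graph $R_t(G)$ has the perfect matchings of $G$ as vertices, two perfect matchings $M,M'$ being adjacent iff $M\oplus M'$ is exactly the boundary of one face. *)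

(* Defs.v *)
From mathcomp Require Import all_boot.
Set Implicit Arguments. Unset Strict Implicit. Unset Printing Implicit Defensive.

(* A vertex (u_i, v_j) is encoded as the pair
   (i, j) : 'I_(2m) * 'I_(2n+1), with the paper's index i in {1..2m} encoded
   0-based as i-1 (similarly j).  Edges are 2-element vertex sets. *)
Section Torus.
Variables m n : nat.

Definition tvert := ('I_(2 * m) * 'I_(2 * n + 1))%type.

Definition hedge (x : tvert) : {set tvert} := [set x; (ordS x.1, x.2)].
Definition vedge (x : tvert) : {set tvert} := [set x; (x.1, ordS x.2)].

Definition tedges : {set {set tvert}} :=
  [set hedge x | x in [set: tvert]] :|: [set vedge x | x in [set: tvert]].

Definition face (x : tvert) : {set {set tvert}} :=
  [set hedge x; vedge (ordS x.1, x.2); hedge (x.1, ordS x.2); vedge x].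

Definition tfaces : {set {set {set tvert}}} := [set face x | x in [set: tvert]].

Definition perfect_matching (M : {set {set tvert}}) : bool :=
  (M \subset tedges) && [forall v : tvert, #|[set e in M | v \in e]| == 1].

Definition Rt_adj : rel {set {set tvert}} := fun M M' =>
  [&& perfect_matching M, perfect_matching M' &
      ((M :\: M') :|: (M' :\: M)) \in tfaces].

(* E_k (paper's index k in {1..2m}, encoded 0-based as k-1) *)
Definition Eset (k : 'I_(2 * m)) : {set {set tvert}} :=
  [set hedge (k, j) | j in [set: 'I_(2 * n + 1)]].

(* M_1 = E_1 ∪ E_3 ∪ ... ∪ E_{2m-1}: 0-based even indices *)
Definition M1 : {set {set tvert}} := \bigcup_(k : 'I_(2 * m) | ~~ odd k) Eset k.
(* M_2 = E_2 ∪ E_4 ∪ ... ∪ E_{2m}: 0-based odd indices *)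
Definition M2 : {set {set tvert}} := \bigcup_(k : 'I_(2 * m) | odd k) Eset k.

End Torus.
Arguments M1 : clear implicits.
Arguments M2 : clear implicits.
Arguments Rt_adj : clear implicits.
Arguments perfect_matching : clear implicits.

(* Main.v *)
Require Import Defs.
From mathcomp Require Import all_boot zify.
Set Implicit Arguments. Unset Strict Implicit. Unset Printing Implicit Defensive.

Lemma ordS_val N (k : 'I_N) : val (ordS k) = if k.+1 == N then 0 else k.+1.
Proof.
rewrite /ordS /=; have := ltn_ord k; case: eqP => [->|h] hk; first by rewrite modnn.
by rewrite modn_small //; lia.
Qed.

Lemma ordS_neq N (k : 'I_N) : 1 < N -> ordS k != k.
Proof. move=> hN; apply/eqP => /(congr1 val); rewrite ordS_val /=; have := ltn_ord k; case: eqP; lia. Qed.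

Lemma ordS2_neq N (k : 'I_N) : 2 < N -> ordS (ordS k) != k.
Proof. move=> hN; apply/eqP => /(congr1 val); rewrite ordS_val (ordS_val k) /=; have := ltn_ord k.
case: (k.+1 =P N) => h1 /=; case: eqP; lia. Qed.

Lemma odd_ordS m (k : 'I_(2 * m)) : odd (ordS k) = ~~ odd k.
Proof. rewrite ordS_val; case: eqP => h /=; last by [].
by have := congr1 odd h; rewrite /= oddM /= => ->.
Qed.

Lemma in_hedge m n (x y : tvert m n) : (y \in hedge x) = (y == x) || (y == (ordS x.1, x.2)).
Proof. by rewrite !inE. Qed.
Lemma in_vedge m n (x y : tvert m n) : (y \in vedge x) = (y == x) || (y == (x.1, ordS x.2)).
Proof. by rewrite !inE. Qed.

Lemma hedge_inj m n : 2 <= m -> injective (@hedge m n).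
Proof.
move=> hm [x1 x2] [y1 y2] e.
have : (y1, y2) \in hedge (x1, x2) by rewrite e !inE eqxx.
have : (x1, x2) \in hedge (y1, y2) by rewrite -e !inE eqxx.
rewrite !inE !xpair_eqE /=.
case/orP=> /andP[/eqP a /eqP b]; first by subst.
subst; case/orP=> /andP[/eqP c /eqP d].
  by move: c => /eqP; rewrite eq_sym (negbTE (ordS_neq _ _)) //; lia.
move: c => /eqP; rewrite eq_sym (negbTE (ordS2_neq _ _)) //; lia.
Qed.

Lemma vedge_hedge m n (x y : tvert m n) : 1 <= m -> 1 <= n -> vedge y != hedge x.
Proof.
move=> hm hn; apply/eqP => e; case: x y e => [x1 x2] [y1 y2] e.
have : (y1, y2) \in hedge (x1, x2) by rewrite -e !inE eqxx.
have : (y1, ordS y2) \in hedge (x1, x2) by rewrite -e !inE eqxx orbT.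
have : (x1, x2) \in vedge (y1, y2) by rewrite e !inE eqxx.
have n1 : 1 < 2 * n + 1 by lia.
have m1 : 1 < 2 * m by lia.
rewrite !inE !xpair_eqE /=.
case/orP=> /andP[/eqP a /eqP b]; subst.
- case/orP=> /andP[_ /eqP c]; first by move: c => /eqP; rewrite (negbTE (ordS_neq _ _)).
  by move: c => /eqP; rewrite (negbTE (ordS_neq _ _)).
- move=> _; case/orP=> /andP[_ /eqP c]; first by move: c => /eqP; rewrite eq_sym (negbTE (ordS_neq _ _)).
  by move: c => /eqP; rewrite eq_sym (negbTE (ordS_neq _ _)).
Qed.

Lemma pm_gen m n (P : pred 'I_(2*m)) : (forall k, P (ordS k) = ~~ P k) ->
  perfect_matching m n (\bigcup_(k | P k) @Eset m n k).
Proof.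
move=> hP; apply/andP; split.
  apply/subsetP => e /bigcupP [k _ /imsetP [j _ ->]]; rewrite inE; apply/orP; left.
  by apply/imsetP; exists (k, j).
apply/forallP => -[v1 v2].
pose k0 := if P v1 then v1 else ord_pred v1.
have Pk0 : P k0.
  rewrite /k0; case: ifP => // h.
  by apply/negPn; rewrite -hP ord_predK h.
have -> : [set e in \bigcup_(k | P k) @Eset m n k | (v1, v2) \in e] = [set hedge (k0, v2)].
  apply/setP => e; rewrite !inE; apply/idP/idP.
    case/andP => /bigcupP[k Pk /imsetP[j _ ->]]; rewrite in_hedge => /orP[/eqP [e1 e2]|/eqP [e1 e2]].
      by rewrite /k0 e1 e2 Pk.
    by rewrite /k0 e1 e2 hP Pk /= ordSK.
  move/eqP ->; apply/andP; split.
    by apply/bigcupP; exists k0 => //; apply/imsetP; exists v2.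
  rewrite in_hedge /k0; case: ifP => h; first by rewrite eqxx.
  by rewrite ord_predK eqxx orbT.
by rewrite cards1.
Qed.

Lemma pmM1 m n : perfect_matching m n (M1 m n).
Proof. by apply: pm_gen => k; rewrite odd_ordS. Qed.
Lemma pmM2 m n : perfect_matching m n (M2 m n).
Proof. by apply: pm_gen => k; rewrite odd_ordS. Qed.

Lemma hedge_in_Eset m n (z : 'I_(2*m)) (y : tvert m n) : 2 <= m ->
  (hedge y \in @Eset m n z) = (y.1 == z).
Proof.
move=> hm; apply/imsetP/eqP => [[j _ /hedge_inj -> //]| <-].
by exists y.2 => //; case: y.
Qed.

Lemma vedge_notin m n (z : 'I_(2*m)) (y : tvert m n) : 1 <= m -> 1 <= n ->
  (vedge y \in @Eset m n z) = false.
Proof.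
move=> hm hn; apply/imsetP => -[j _ e].
by move: (vedge_hedge (z, j) y hm hn); rewrite e eqxx.
Qed.

Lemma odd_symD (T : finType) (A B : {set T}) :
  odd #|(A :\: B) :|: (B :\: A)| = odd #|A| (+) odd #|B|.
Proof.
rewrite cardsU.
have -> : (A :\: B) :&: (B :\: A) = set0.
  by apply/setP => x; rewrite !inE; case: (x \in A); case: (x \in B).
rewrite cards0 subn0.
have h1 := cardsID B A. have h2 := cardsID A B.
rewrite setIC in h2.
rewrite -h1 -h2 !oddD.
by case: (odd #|A :\: B|); case: (odd #|B :\: A|); case: (odd #|A :&: B|).
Qed.

Lemma face_E m n (z : 'I_(2*m)) (x : tvert m n) : 1 <= n -> 2 <= m ->
  ~~ odd #|@Eset m n z :&: face x|.
Proof.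
move=> hn hm.
have hm1 : 1 <= m by lia.
have -> : @Eset m n z :&: face x =
   if x.1 == z then [set hedge x; hedge (x.1, ordS x.2)] else set0.
  apply/setP => e; rewrite !inE -!orbA.
  have vh y y' := negbTE (@vedge_hedge m n y y' hm1 hn).
  case: (e =P hedge x) => [->|h1]; rewrite ?hedge_in_Eset //=.
    by case: eqP => //= _; rewrite ?set21 ?in_set0.
  case: (e =P vedge (ordS x.1, x.2)) => [->|h2]; rewrite ?vedge_notin //=.
    by case: ifP => _; rewrite ?in_set0 // in_set2 !vh.
  case: (e =P hedge (x.1, ordS x.2)) => [->|h3]; rewrite ?hedge_in_Eset //=.
    by case: eqP => //= _; rewrite ?set22 ?in_set0.
  case: (e =P vedge x) => [->|h4]; rewrite ?vedge_notin //=.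
    by case: ifP => _; rewrite ?in_set0 // in_set2 !vh.
  rewrite andbF; case: ifP => _; rewrite ?in_set0 // in_set2.
  by case: eqP => // ; case: eqP.
case: eqP => _; last by rewrite cards0.
rewrite cards2.
case: eqP => // /hedge_inj; case: x => x1 x2 /= h.
by move: (h hm) => [] /eqP; rewrite eq_sym (negbTE (ordS_neq _ _)) //; lia.
Qed.

Lemma inv_step m n (z : 'I_(2*m)) M M' : 1 <= n -> 2 <= m -> Rt_adj m n M M' ->
  odd #|@Eset m n z :&: M| = odd #|@Eset m n z :&: M'|.
Proof.
move=> hn hm /and3P[_ _ /imsetP[x _ hF]].
set F := (M :\: M') :|: (M' :\: M) in hF.
have hM' : M' = (M :\: F) :|: (F :\: M).
  by apply/setP => e; rewrite /F !inE; case: (e \in M); case: (e \in M').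
set E := @Eset m n z.
have -> : E :&: M' = ((E :&: M) :\: (E :&: F)) :|: ((E :&: F) :\: (E :&: M)).
  by rewrite hM'; apply/setP => e; rewrite !inE; case: (e \in E); case: (e \in M); case: (e \in F).
rewrite odd_symD hF (negbTE (face_E z x hn hm)).
by rewrite addbF.
Qed.

Theorem lemma4p1 (n m : nat) :
  1 <= n -> 2 <= m ->
  [/\ perfect_matching m n (M1 m n), perfect_matching m n (M2 m n) &
      ~~ connect (Rt_adj m n) (M1 m n) (M2 m n)].
Proof.
move=> hn hm; split; [exact: pmM1 | exact: pmM2 |].
have h0 : 0 < 2 * m by lia.
pose z : 'I_(2*m) := Ordinal h0.
pose a := [pred M : {set {set tvert m n}} | odd #|@Eset m n z :&: M|].
apply/negP => /(closed_connect (a := a)) h.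
have : a (M1 m n) = a (M2 m n).
  apply: h => M M' /(inv_step z hn hm); by rewrite /a !inE.
rewrite /a /=.
have -> : @Eset m n z :&: M1 m n = @Eset m n z.
  apply/setIidPl/subsetP => e he; apply/bigcupP; by exists z.
have -> : @Eset m n z :&: M2 m n = set0.
  apply/setP => e; rewrite !inE; apply/negbTE/andP => -[/imsetP[j _ ->]] /bigcupP[k ok].
  rewrite hedge_in_Eset //= => /eqP ek; by move: ok; rewrite -ek.
rewrite cards0 card_imset ?cardsT ?card_ord ?addn1 //=.
  by rewrite oddM.
by move=> j j' /(hedge_inj hm) [].
Qed.
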